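(* Let $m\ge1$, let $\vartheta=\vartheta_m$ be the degree-$m$ random metallic mean substitution, $\mathcal{S}_m=\{a^iba^{m-i}\mid0\le i\le m\}$, $p\ge0$, and $u$ a finite word over $\{a,b\}$. If the set $\vartheta^p(a)\,u\,\mathcal{S}_m$ contains a $\vartheta$-legal word, then for every $0\le j\le m$ the set $\vartheta^p(a)\,\vartheta(u)\,(\vartheta(b))^j\,\mathcal{S}_m$ contains a $\vartheta$-legal word.
   Context: The degree-$m$ random metallic mean substitution is $\vartheta_m\colon a\mapsto\{a^iba^{m-i}\mid0\le i\le m\},\ b\mapsto\{a\}$ (for $m=1$ this is the random Fibonacci substitution $a\mapsto\{ab,ba\}, b\mapsto\{a\}$). It is extended to words by set concatenation $\vartheta(w_1\cdots w_k)=\vartheta(w_1)\cdots\vartheta(w_k)$ with $AB=\{xy\mid x\in A,y\in B\}$ (single words identified with singletons), and to sets by unions; $\vartheta^p$ is the $p$-fold iterate, $\vartheta^0(a)=\{a\}$; for a set $A$, $A^0=\{\text{empty word}\}$ and $A^j$ is the $j$-fold set concatenation. A word is $\vartheta$-legal if it is a subword of some word in $\vartheta^k(x)$ for some $k\ge0$ and letter $x$. *)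

(* Defs.v *)
From HB Require Import structures.
From mathcomp Require Import all_boot.
Set Implicit Arguments. Unset Strict Implicit. Unset Printing Implicit Defensive.

Inductive letter := la | lb.

Definition letter_eqb (x y : letter) : bool :=
  match x, y with la, la | lb, lb => true | _, _ => false end.
Lemma letter_eqP : Equality.axiom letter_eqb.
Proof. by case; case; constructor. Qed.
HB.instance Definition _ := hasDecEq.Build letter letter_eqP.

Definition word := seq letter.

(* Finite sets of words are represented as lists; membership is \in. *)
Definition setcat (A B : seq word) : seq word := [seq x ++ y | x <- A, y <- B].

Definition setpow (A : seq word) (j : nat) : seq word := iter j (setcat A) [:: [::]].

Definition theta_letter (m : nat) (x : letter) : seq word :=
  match x with
  | la => [seq nseq i la ++ lb :: nseq (m - i) la | i <- iota 0 m.+1]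
  | lb => [:: [:: la]]
  end.

Definition Sm (m : nat) : seq word := theta_letter m la.

Definition theta_word (m : nat) (w : word) : seq word :=
  foldr (fun x acc => setcat (theta_letter m x) acc) [:: [::]] w.

Definition theta_set (m : nat) (S : seq word) : seq word :=
  flatten (map (theta_word m) S).

Definition theta_iter (m p : nat) (S : seq word) : seq word := iter p (theta_set m) S.

Definition legal (m : nat) (w : word) : Prop :=
  exists (k : nat) (x : letter) (v : word),
    v \in theta_iter m k [:: [:: x]] /\ infix w v.

(* Main.v *)
Require Import Defs.
From mathcomp Require Import all_boot zify.
Set Implicit Arguments. Unset Strict Implicit. Unset Printing Implicit Defensive.

Lemma mem_setcat (A B : seq word) x y : x \in A -> y \in B -> x ++ y \in setcat A B.
Proof. move=> hx hy; exact: (allpairs_f cat hx hy). Qed.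

Lemma setcatP (A B : seq word) z : z \in setcat A B ->
  exists x y, [/\ x \in A, y \in B & z = x ++ y].
Proof. by move/allpairsP=> [[x y] /= [hx hy ->]]; exists x, y. Qed.

Section S.
Variable m : nat.

Lemma tw_cons x v : theta_word m (x :: v) = setcat (theta_letter m x) (theta_word m v).
Proof. by []. Qed.

Lemma tw_cat v1 v2 y1 y2 : y1 \in theta_word m v1 -> y2 \in theta_word m v2 ->
  y1 ++ y2 \in theta_word m (v1 ++ v2).
Proof.
elim: v1 y1 => [|x v1 IH] y1 /=.
  by rewrite inE => /eqP ->.
move=> /setcatP [a [b [ha hb ->]]] h2; rewrite -catA; apply: mem_setcat => //; exact: IH.
Qed.

Lemma tw_catP v1 v2 y : y \in theta_word m (v1 ++ v2) ->
  exists y1 y2, [/\ y1 \in theta_word m v1, y2 \in theta_word m v2 & y = y1 ++ y2].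
Proof.
elim: v1 y => [|x v1 IH] y /=.
  by move=> h; exists [::], y; rewrite inE eqxx.
move=> /setcatP [a [b [ha hb ->]]]; have [y1 [y2 [h1 h2 ->]]] := IH _ hb.
exists (a ++ y1), y2; split => //; [exact: mem_setcat | by rewrite catA].
Qed.

Lemma mem_Sm i : i <= m -> nseq i la ++ lb :: nseq (m - i) la \in theta_letter m la.
Proof. move=> hi; apply/mapP; exists i => //; by rewrite mem_iota. Qed.

Lemma theta_letter_ne x : exists y, y \in theta_letter m x.
Proof.
case: x; last by exists [:: la]; rewrite inE.
exists (nseq 0 la ++ lb :: nseq (m - 0) la); exact: mem_Sm.
Qed.

Lemma tw_ne v : exists y, y \in theta_word m v.
Proof.
elim: v => [|x v [y hy]]; first by exists [::]; rewrite inE.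
have [a ha] := theta_letter_ne x; exists (a ++ y); rewrite tw_cons; exact: mem_setcat.
Qed.

Definition R q v y := y \in theta_iter m q [:: v].

Lemma iter_set q S y : y \in theta_iter m q S <-> exists2 s, s \in S & R q s y.
Proof.
rewrite /R; elim: q y => [|q IH] y /=.
  split; first by move=> h; exists y => //; rewrite inE.
  by move=> [s hs]; rewrite inE => /eqP ->.
split.
  move/flatten_mapP=> [x /IH [s hs hx] hy]; exists s => //.
  by apply/flatten_mapP; exists x.
move=> [s hs /flatten_mapP [x hx hy]]; apply/flatten_mapP; exists x => //.
by apply/IH; exists s.
Qed.

Lemma R_S q v y : R q.+1 v y <-> exists2 y', R q v y' & y \in theta_word m y'.
Proof. rewrite /R /theta_iter iterS; split; by move/flatten_mapP. Qed.

Lemma R_S' q v y : R q.+1 v y <-> exists2 v', v' \in theta_word m v & R q v' y.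
Proof.
have E : R q.+1 v y = (y \in theta_iter m q (theta_word m v)).
  by rewrite /R /theta_iter iterSr /theta_set /= cats0.
by rewrite E; exact: iter_set.
Qed.

Lemma R0 v y : R 0 v y <-> y = v.
Proof. by rewrite /R /= inE; split => [/eqP|->]. Qed.

Lemma Rcat q v1 v2 y1 y2 : R q v1 y1 -> R q v2 y2 -> R q (v1 ++ v2) (y1 ++ y2).
Proof.
elim: q y1 y2 => [|q IH] y1 y2.
  by move=> /R0 -> /R0 ->; apply/R0.
move=> /R_S [z1 h1 k1] /R_S [z2 h2 k2]; apply/R_S; exists (z1 ++ z2).
  exact: IH.
exact: tw_cat.
Qed.

Lemma RcatP q v1 v2 y : R q (v1 ++ v2) y ->
  exists y1 y2, [/\ R q v1 y1, R q v2 y2 & y = y1 ++ y2].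
Proof.
elim: q y => [|q IH] y.
  by move=> /R0 ->; exists v1, v2; split => //; apply/R0.
move=> /R_S [z hz hy]; have [z1 [z2 [k1 k2 E]]] := IH _ hz; subst z.
have [y1 [y2 [h1 h2 ->]]] := tw_catP hy.
by exists y1, y2; split => //; apply/R_S; [exists z1 | exists z2].
Qed.

Hypothesis hm : 1 <= m.

Definition B1 c := nseq c la ++ lb :: nseq (m - c) la.

Lemma aB2 c : 1 <= c <= m ->
  la :: (nseq (c - 1) la ++ lb :: nseq (m - (c - 1)) la) = B1 c ++ [:: la].
Proof.
case/andP=> h1 h2; rewrite /B1; case: c h1 h2 => // c _ h2.
rewrite subn1 /= -catA /=; congr (_ :: _ ++ _ :: _).
have -> : m - c = (m - c.+1) + 1 by lia.
by rewrite nseqD.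
Qed.

Lemma shift c n : 1 <= c <= m ->
  la :: flatten (nseq n (nseq (c - 1) la ++ lb :: nseq (m - (c - 1)) la))
  = flatten (nseq n (B1 c)) ++ [:: la].
Proof.
move=> hc; elim: n => [|n IH] //=.
by rewrite -cat_cons aB2 // -catA /= IH catA.
Qed.

Lemma tw_nseq_a n w : w \in theta_letter m la ->
  flatten (nseq n w) \in theta_word m (nseq n la).
Proof.
move=> hw; elim: n => [|n IH] /=; first by rewrite inE.
exact: mem_setcat.
Qed.

Lemma V c s : 1 <= c <= m -> s \in theta_letter m la ->
  flatten (nseq m (B1 c)) ++ [:: la] \in theta_word m s.
Proof.
move=> hc /mapP [i]; rewrite mem_iota add0n ltnS => /andP [_ hi] ->.
have hB1 : B1 c \in theta_letter m la by apply: mem_Sm; case/andP: hc.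
have hB2 : nseq (c - 1) la ++ lb :: nseq (m - (c - 1)) la \in theta_letter m la.
  by apply: mem_Sm; case/andP: hc => h1 h2; rewrite leq_subLR; apply: leq_trans h2 _; rewrite leq_addl.
have h2 : la :: flatten (nseq (m - i) (nseq (c - 1) la ++ lb :: nseq (m - (c - 1)) la))
   \in theta_word m (lb :: nseq (m - i) la).
  rewrite -cat1s tw_cons; apply: mem_setcat; first by rewrite inE.
  exact: tw_nseq_a.
have := tw_cat (tw_nseq_a i hB1) h2.
by rewrite shift // catA -flatten_cat -nseqD subnKC.
Qed.

Lemma D_letter x a1 a2 : a1 \in theta_letter m x -> a2 \in theta_letter m x ->
  exists c, c \in theta_word m a1 /\ c \in theta_word m a2.
Proof.
case: x => /=.
  move=> h1 h2; exists (flatten (nseq m (B1 1)) ++ [:: la]); split; apply: V => //; by rewrite hm.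
rewrite !inE => /eqP -> /eqP ->; have [y hy] := tw_ne [:: la]; by exists y.
Qed.

Lemma D v v' t : v' \in theta_word m v -> t \in theta_word m v ->
  exists t', t' \in theta_word m v' /\ t' \in theta_word m t.
Proof.
elim: v v' t => [|x v IH] v' t /=.
  by rewrite !inE => /eqP -> /eqP ->; exists [::]; rewrite inE.
move=> /setcatP [a1 [b1 [ha1 hb1 ->]]] /setcatP [a2 [b2 [ha2 hb2 ->]]].
have [c [hc1 hc2]] := D_letter ha1 ha2.
have [d [hd1 hd2]] := IH _ _ hb1 hb2.
by exists (c ++ d); split; apply: tw_cat.
Qed.

Lemma C q : forall v y t, R q v y -> t \in theta_word m v ->
  exists z, z \in theta_word m y /\ R q t z.
Proof.
elim: q => [|q IH] v y t.
  by move=> /R0 -> ht; exists t; split => //; apply/R0.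
move=> /R_S' [v' hv' hy] ht.
have [t' [h1 h2]] := D hv' ht.
have [z [hz1 hz2]] := IH _ _ _ hy h1.
by exists z; split => //; apply/R_S'; exists t'.
Qed.

Lemma E s j : s \in theta_letter m la -> j <= m ->
  exists t s' r, [/\ t \in theta_word m s, s' \in theta_letter m la & t = nseq j la ++ s' ++ r].
Proof.
move=> hs hj.
have hm1 : m = (m - 1).+1 by rewrite subn1 prednK.
case: j hj => [|j] hj.
  have ht : flatten (nseq m (B1 1)) ++ [:: la] \in theta_word m s by apply: V; rewrite ?hm.
  exists (flatten (nseq m (B1 1)) ++ [:: la]), (B1 1),
    (flatten (nseq (m - 1) (B1 1)) ++ [:: la]); split => //.
    by rewrite /B1; apply: mem_Sm.
  by rewrite {1}hm1 /= catA.
have ht : flatten (nseq m (B1 j.+1)) ++ [:: la] \in theta_word m s by apply: V; rewrite ?hj.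
have [r' Er] : exists r', flatten (nseq (m - 1) (B1 j.+1)) ++ [:: la] = nseq j.+1 la ++ r'.
  case E1: (m - 1) => [|k].
    have Ej : j = 0 by lia.
    by rewrite Ej; exists [::].
  by exists (lb :: nseq (m - j.+1) la ++ flatten (nseq k (B1 j.+1)) ++ [:: la]); rewrite /= /B1 -!catA.
exists (flatten (nseq m (B1 j.+1)) ++ [:: la]), (nseq 0 la ++ lb :: nseq (m - 0) la), r'.
split => //; first by apply: mem_Sm.
rewrite {1}hm1 /= -catA Er /B1 -!catA /= subn0.
have eq : nseq (m - j.+1) la ++ la :: nseq j la ++ r' = nseq m la ++ r'.
  by rewrite -cat_cons catA -[la :: nseq j la]/(nseq j.+1 la) -nseqD subnK.
by rewrite eq.
Qed.

Lemma legal_infix w w' : legal m w -> infix w' w -> legal m w'.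
Proof.
move=> [k [x [v [hv hi]]]] hi'; exists k, x, v; split => //; exact: infix_trans hi' hi.
Qed.

Lemma legal_theta w w' : legal m w -> w' \in theta_word m w -> legal m w'.
Proof.
move=> [k [x [v [hv /infixP [l [r Ev]]]]]] hw'.
have [l' hl] := tw_ne l; have [r' hr] := tw_ne r.
exists k.+1, x, (l' ++ w' ++ r'); split; last exact: infix_infix.
have : R k.+1 [:: x] (l' ++ w' ++ r'); last by [].
apply/R_S; exists v => //; rewrite Ev; apply: tw_cat => //; exact: tw_cat.
Qed.

Lemma setpow_a j : nseq j la \in setpow (theta_letter m lb) j.
Proof.
elim: j => [|j IH]; first by rewrite inE.
rewrite /setpow iterS -/(setpow _ j) (_ : nseq j.+1 la = [:: la] ++ nseq j la) //; apply: mem_setcat => //; by rewrite inE.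
Qed.

End S.

Theorem mainTheorem9 (m p : nat) (u : word) :
  1 <= m ->
  (exists w, w \in setcat (setcat (theta_iter m p [:: [:: la]]) [:: u]) (Sm m)
             /\ legal m w) ->
  forall j : nat, j <= m ->
    exists w, w \in setcat (setcat (setcat (theta_iter m p [:: [:: la]])
                                           (theta_word m u))
                                   (setpow (theta_letter m lb) j))
                           (Sm m)
              /\ legal m w.
Proof.
move=> hm [w [hw hl]] j hj.
have [xu [s [hxu hs Ew]]] := setcatP hw.
have [x [u' [hx hu' Exu]]] := setcatP hxu.
move: hu'; rewrite inE => /eqP Eu; subst u' xu w.
have ht : nseq (m - 1) la ++ lb :: nseq (m - (m - 1)) la \in theta_letter m la.
  by apply: mem_Sm; rewrite leq_subr.
have hx' : R m p [:: la] x by [].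
have hta : nseq (m - 1) la ++ lb :: nseq (m - (m - 1)) la \in theta_word m [:: la].
  by rewrite -[_ ++ _]cats0 tw_cons; apply: mem_setcat => //; rewrite inE.
have [z [hz1 hz2]] := C hm hx' hta.
have Et : nseq (m - 1) la ++ lb :: nseq (m - (m - 1)) la = (nseq (m - 1) la ++ [:: lb]) ++ [:: la].
  by rewrite -catA /= subKn.
rewrite Et in hz2; have [z1 [x' [_ hx'' Ez]]] := RcatP hz2.
have [f hf] := tw_ne m u.
have [t [s' [r [ht0 hs' Et']]]] := E hm hs hj.
have hw0 : z ++ f ++ t \in theta_word m ((x ++ u) ++ s).
  by rewrite -catA; apply: tw_cat => //; apply: tw_cat => //.
have hl0 := legal_theta hl hw0.
exists (((x' ++ f) ++ nseq j la) ++ s'); split.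
  apply: mem_setcat => //; apply: mem_setcat; last exact: setpow_a.
  by apply: mem_setcat.
apply: legal_infix hl0 _; rewrite Ez Et' -!catA.
by apply: infix_catl; rewrite !catA; apply: prefix_infix.
Qed.
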